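(* Let $N\ge2$, $\sigma\in S_N$, and write $\sigma=T_{a_n}\cdots T_{a_1}$ as a product of simple transpositions. Let $\mathbf{A}_\sigma=\mathbf{T}_{a_n}\cdots\mathbf{T}_{a_1}$ be the associated $2^N\times 2^N$ matrix. Then for each $k=0,1,\dots,N$, \[ [\mathbf{A}_\sigma]_{h_k,h_k}=\operatorname{sgn}(\sigma)\prod_{j=1}^{k}\Big(\frac{1-\xi_j}{1-\xi_{\sigma(j)}}\Big)^{j-1}\prod_{j=k+1}^{N}\Big(\frac{1-\xi_j}{1-\xi_{\sigma(j)}}\Big)^{j-2}. \]
   Context: $\xi_1,\dots,\xi_N$ are complex variables different from $1$. For $l=1,\dots,N-1$, $T_l$ acts on $\sigma\in S_N$ (viewed as the word $(\sigma(1)\cdots\sigma(N))$) by $(T_l\sigma)(l)=\sigma(l+1)$, $(T_l\sigma)(l+1)=\sigma(l)$, $(T_l\sigma)(j)=\sigma(j)$ otherwise. $\mathbf{S}_{\beta\alpha}$ is the $4\times4$ matrix with rows $\big(-\tfrac{1-\xi_\beta}{1-\xi_\alpha},0,0,0\big)$, $\big(0,-\tfrac{1-\xi_\beta}{1-\xi_\alpha},\tfrac{\xi_\beta-\xi_\alpha}{1-\xi_\alpha},0\big)$, $(0,0,-1,0)$, $\big(0,0,0,-\tfrac{1-\xi_\beta}{1-\xi_\alpha}\big)$, and $\mathbf{T}_l(\alpha,\beta)=\mathbf{I}_2^{\otimes(l-1)}\otimes\mathbf{S}_{\beta\alpha}\otimes\mathbf{I}_2^{\otimes(N-l-1)}$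 (Kronecker products). In the product $\mathbf{A}_\sigma=\mathbf{T}_{a_n}\cdots\mathbf{T}_{a_1}$, the factor $\mathbf{T}_{a_i}$ means $\mathbf{T}_{a_i}(\alpha,\beta)$ where, with $\sigma_{i-1}=T_{a_{i-1}}\cdots T_{a_1}$ ($\sigma_0$ the identity), $\alpha=\sigma_{i-1}(a_i)$ and $\beta=\sigma_{i-1}(a_i+1)$ (i.e., $T_{a_i}$ turns the word $(\cdots\alpha\beta\cdots)$ into $(\cdots\beta\alpha\cdots)$). (The matrix $\mathbf{A}_\sigma$ is independent of the chosen decomposition.) $h_k=2^{N-1}+\dots+2^{N-k}+1$ for $1\le k\le N$, $h_0=1$. *)

(* Defs.v *)
From HB Require Import structures.
From mathcomp Require Import all_boot all_order all_algebra all_fingroup.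
Set Implicit Arguments. Unset Strict Implicit. Unset Printing Implicit Defensive.
Import Order.TTheory GRing.Theory Num.Theory.
Local Open Scope ring_scope.

(* Kronecker product: row index of A (x) B is i1 * m2 + i2 (first factor most
   significant), entry A i1 j1 * B i2 j2. *)
Lemma kron_divP m1 m2 (i : 'I_(m1 * m2)) : (i %/ m2 < m1)%N.
Proof.
case: m2 i => [|m2] i; first by case: i => i; rewrite muln0.
by rewrite ltn_divLR // ltn_ord.
Qed.

Lemma kron_modP m1 m2 (i : 'I_(m1 * m2)) : (i %% m2 < m2)%N.
Proof.
case: m2 i => [|m2] i; first by case: i => i; rewrite muln0.
by rewrite ltn_pmod.
Qed.

Definition kron (R : ringType) m1 n1 m2 n2 (A : 'M[R]_(m1, n1)) (B : 'M[R]_(m2, n2))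
  : 'M[R]_(m1 * m2, n1 * n2) :=
  \matrix_(i, j) (A (Ordinal (kron_divP i)) (Ordinal (kron_divP j))
                  * B (Ordinal (kron_modP i)) (Ordinal (kron_modP j))).

Section Defs.
Variables (F : fieldType) (N : nat) (xi : 'I_N -> F).

(* Positions are 0-based: the simple transposition T_l of the paper (1 <= l <= N-1)
   is represented by the position l-1 : 'I_N; nextpos gives position l (0-based). *)
Definition nextpos (l : 'I_N) : 'I_N := insubd l l.+1.

(* T_l acting on a word p (p j = letter at position j): swaps positions l, l+1. *)
Definition swapw (l : 'I_N) (p : 'S_N) : 'S_N := tperm l (nextpos l) * p.

(* sigma = T_{a_n} ... T_{a_1} applied to the identity word. *)
Fixpoint wordp (p : 'S_N) (a : seq 'I_N) : 'S_N :=
  if a is l :: a' then wordp (swapw l p) a' else p.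

Definition Sba (b a : 'I_N) : 'M[F]_4 :=
  \matrix_(i < 4, j < 4)
    match val i, val j with
    | 0, 0 | 1, 1 | 3, 3 => - ((1 - xi b) / (1 - xi a))
    | 1, 2 => (xi b - xi a) / (1 - xi a)
    | 2, 2 => -1
    | _, _ => 0
    end.

(* T_l(alpha, beta) = I_2^{(x)(l-1)} (x) S_{beta alpha} (x) I_2^{(x)(N-l-1)}
   (l 0-based here, so the factors are 2^l, 4, 2^(N-l-2)); conform_mx only
   serves to view this 2^l*4*2^(N-l-2) matrix as a 2^N matrix (dimensions agree
   for every valid l, i.e. l.+1 < N). *)
Definition Tmat (l a b : 'I_N) : 'M[F]_(2 ^ N) :=
  conform_mx (0 : 'M[F]_(2 ^ N))
    (kron (kron (1%:M : 'M[F]_(2 ^ l)) (Sba b a)) (1%:M : 'M[F]_(2 ^ (N - l.+2)))).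

(* A = T_{a_n} ... T_{a_1}, with T_{a_i} = T_{a_i}(sigma_{i-1}(a_i), sigma_{i-1}(a_i+1)). *)
Fixpoint Aaux (p : 'S_N) (a : seq 'I_N) : 'M[F]_(2 ^ N) :=
  if a is l :: a' then Aaux (swapw l p) a' *m Tmat l (p l) (p (nextpos l))
  else 1%:M.

Definition Amat (a : seq 'I_N) : 'M[F]_(2 ^ N) := Aaux 1 a.

End Defs.

Lemma pow2_gt0 N : (0 < 2 ^ N)%N.
Proof. by rewrite expn_gt0. Qed.

(* 0-based version of h_k: h_k - 1 = 2^(N-1) + ... + 2^(N-k). *)
Definition hidx (N k : nat) : 'I_(2 ^ N) :=
  insubd (Ordinal (pow2_gt0 N)) (\sum_(i < k) 2 ^ (N - i.+1))%N.

(* Main.v *)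
Require Import Defs.
From HB Require Import structures.
From mathcomp Require Import all_boot all_order all_algebra all_fingroup.
From mathcomp Require Import zify ring.
Import Order.TTheory GRing.Theory Num.Theory.

Section NatPart.
Local Open Scope nat_scope.
Lemma digit X s m r : 0 < m -> s < 4 -> r < m -> ((X*4+s) * m + r) %/ m %% 4 = s.
Proof.
move=> m0 s4 rm; rewrite divnMDl // divn_small // addn0 modnMDl modn_small //.
Qed.

Lemma hsum N k : k <= N -> \sum_(i < k) 2 ^ (N - i.+1) + 2 ^ (N - k) = 2 ^ N.
Proof.
elim: k => [|k IH] hk; first by rewrite big_ord0 subn0.
rewrite big_ord_recr /= -addnA.
have -> : 2 ^ (N - k.+1) + 2 ^ (N - k.+1) = 2 ^ (N - k).
  by rewrite addnn -mul2n -expnS; congr expn; lia.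
by apply: IH; lia.
Qed.

Lemma hdigit N k l : l.+1 < N -> k <= N ->
  (2 ^ N - 2 ^ (N - k)) %/ 2 ^ (N - l.+2) %% 4 =
  if l.+1 < k then 3 else if l.+1 == k then 2 else 0.
Proof.
move=> hl hk.
case: ltnP => h1.
  have eN : 2^N = 2^l * 4 * (2^(k - l.+2) * 2^(N-k)).
    by rewrite -[4]/(2^2) -!expnD; congr expn; lia.
  have em : 2^(N - l.+2) = 2^(k - l.+2) * 2^(N-k) by rewrite -expnD; congr expn; lia.
  rewrite eN em.
  have a0 : 0 < 2 ^ l by rewrite expn_gt0.
  have b0 : 0 < 2 ^ (k - l.+2) by rewrite expn_gt0.
  have c0 : 0 < 2 ^ (N - k) by rewrite expn_gt0.
  move: a0 b0 c0; set a := 2 ^ l; set b := 2 ^ (k - l.+2); set c := 2 ^ (N - k) => a0 b0 c0.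
  have -> : a * 4 * (b * c) - c = ((a-1)*4+3)*(b*c) + (b*c - c).
    case: a a0 => // a _. case: b b0 => // b _. case: c c0 => // c _.
    rewrite subn1 /=.
    have h : c.+1 <= b.+1 * c.+1 by rewrite leq_pmull.
    rewrite addnBA // ; congr (_ - _); ring.
  rewrite digit ?muln_gt0 ?b0 ?c0 //.
  by rewrite ltn_subrL c0 muln_gt0 b0 c0.
case: eqP => h2.
  have eN : 2^N = 2^l * 4 * 2^(N - l.+2).
    by rewrite -[4]/(2^2) -!expnD; congr expn; lia.
  have ec : 2^(N - k) = 2 * 2^(N - l.+2) by rewrite -expnS; congr expn; lia.
  rewrite eN ec.
  have a0 : 0 < 2 ^ l by rewrite expn_gt0.
  have c0 : 0 < 2 ^ (N - l.+2) by rewrite expn_gt0.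
  move: a0 c0; set a := 2 ^ l; set c := 2 ^ (N - l.+2) => a0 c0.
  have -> : a * 4 * c - 2 * c = ((a-1)*4+2)*c + 0.
    case: a a0 => // a _; rewrite subn1 /= addn0.
    have -> : a.+1 * 4 * c = (a * 4 + 2) * c + 2 * c by ring.
    by rewrite addnK.
  by rewrite digit.
have eN : 2^N = 2^l * 4 * 2^(N - l.+2).
  by rewrite -[4]/(2^2) -!expnD; congr expn; lia.
have ec : 2^(N - k) = 2^(l - k) * 4 * 2^(N - l.+2).
  by rewrite -[4]/(2^2) -!expnD; congr expn; lia.
rewrite eN ec.
have a0 : 2 ^ (l - k) <= 2 ^ l by rewrite leq_pexp2l //; lia.
have c0 : 0 < 2 ^ (N - l.+2) by rewrite expn_gt0.
move: a0 c0; set a := 2 ^ l; set d := 2 ^ (l - k); set c := 2 ^ (N - l.+2) => a0 c0.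
have -> : a * 4 * c - d * 4 * c = ((a-d)*4+0)*c + 0 by nia.
by rewrite digit.
Qed.

End NatPart.

Local Open Scope ring_scope.
Set Implicit Arguments. Unset Strict Implicit. Unset Printing Implicit Defensive.
Section S.
Variables (F : fieldType) (N : nat) (xi : 'I_N -> F).

Definition Sf (b a : 'I_N) (x y : nat) : F :=
    match x, y with
    | 0, 0 | 1, 1 | 3, 3 => - ((1 - xi b) / (1 - xi a))
    | 1, 2 => (xi b - xi a) / (1 - xi a)
    | 2, 2 => -1
    | _, _ => 0
    end.

Lemma TmatE (l a b : 'I_N) (i j : 'I_(2 ^ N)) : (l.+1 < N)%N ->
  Tmat xi l a b i j =
   ((i %/ 2 ^ (N - l.+2) %/ 4 == j %/ 2 ^ (N - l.+2) %/ 4)%N%:R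
     * Sf b a (i %/ 2 ^ (N - l.+2) %% 4)%N (j %/ 2 ^ (N - l.+2) %% 4)%N)
   * (i %% 2 ^ (N - l.+2) == j %% 2 ^ (N - l.+2))%N%:R.
Proof.
move=> hl.
have e : (2^l*4*2^(N-l.+2) = 2^N)%N.
  by rewrite -[4%N]/(2^2)%N -!expnD; congr (expn _ _); lia.
rewrite /Tmat /conform_mx; case: eqP => e1; last by [].
rewrite castmxE !mxE /=.
by []. Qed.

Lemma Sf_low b a x y : (x < 4)%N -> (y < x)%N -> Sf b a x y = 0.
Proof. by case: x => [|[|[|[|x]]]] //; case: y => [|[|[|y]]]. Qed.

Lemma Tmat_upper (l a b : 'I_N) (i j : 'I_(2 ^ N)) : (l.+1 < N)%N ->
  (j < i)%N -> Tmat xi l a b i j = 0.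
Proof.
move=> hl hji; rewrite TmatE //.
set m := (2 ^ (N - l.+2))%N.
have m0 : (0 < m)%N by rewrite expn_gt0.
case E1: (i%/m%/4 == j%/m%/4)%N; last by rewrite !mul0r.
case E3: (i%%m == j%%m)%N; last by rewrite mulr0.
rewrite Sf_low ?mulr0 ?mul0r // ?ltn_mod //.
rewrite ltnNge; apply/negP => hle.
have qle : (i %/ m <= j %/ m)%N.
  rewrite (divn_eq (i %/ m) 4) (divn_eq (j %/ m) 4) (eqP E1).
  by rewrite leq_add2l.
have : (i <= j)%N.
  rewrite (divn_eq i m) (divn_eq j m) (eqP E3) leq_add2r.
  by rewrite leq_mul2r qle orbT.
by rewrite leqNgt hji.
Qed.


Definition upper n (M : 'M[F]_n) := forall i j : 'I_n, (j < i)%N -> M i j = 0.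

Lemma upper_mulmx n (A B : 'M[F]_n) : upper A -> upper B -> upper (A *m B).
Proof.
move=> hA hB i j hji; rewrite mxE big1 // => t _.
case: (ltnP t i) => h; first by rewrite hA ?mul0r.
by rewrite hB ?mulr0 // (leq_trans hji h).
Qed.

Lemma diag_mulmx n (A B : 'M[F]_n) i : upper A -> upper B ->
  (A *m B) i i = A i i * B i i.
Proof.
move=> hA hB; rewrite mxE (bigD1 i) //= big1 ?addr0 // => t ht.
case: (ltngtP t i) => h; first by rewrite hA ?mul0r.
  by rewrite hB ?mulr0.
by exfalso; move/negP: ht; apply; apply/eqP/val_inj.
Qed.

Lemma Aaux_upper (p : 'S_N) a : all (fun l : 'I_N => (l.+1 < N)%N) a -> upper (Aaux xi p a).
Proof.
elim: a p => [|l a IH] p /=.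
  by move=> _ i j hji; rewrite mxE; case: eqP => // eij; rewrite eij ltnn in hji.
case/andP=> hl ha; apply: upper_mulmx; first exact: IH.
by move=> i j; apply: Tmat_upper.
Qed.

Lemma nextposE (l : 'I_N) : (l.+1 < N)%N -> nat_of_ord (nextpos l) = l.+1.
Proof. by move=> hl; rewrite /nextpos val_insubd hl. Qed.

Variable k : nat.
Hypothesis hk : (k <= N)%N.
Hypothesis hxi : forall i, xi i != 1.

Definition ee (j : nat) : int := if (j < k)%N then j%:Z else j%:Z - 1.
Definition G (p : 'S_N) := \prod_(j < N) (1 - xi (p j)) ^ (ee j).

Lemma hidx_val : val (hidx N k) = (2 ^ N - 2 ^ (N - k))%N.
Proof.
have e := hsum N k hk.
rewrite /hidx val_insubd /=.
have -> : (\sum_(i < k) 2 ^ (N - i.+1) = 2 ^ N - 2 ^ (N - k))%N.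
  by rewrite -e addnK.
have -> : (2 ^ N - 2 ^ (N - k) < 2 ^ N)%N by rewrite ltn_subrL !expn_gt0.
by [].
Qed.

Lemma unit1 i : 1 - xi i != 0.
Proof. by rewrite subr_eq0 eq_sym hxi. Qed.

Lemma key_step (l : 'I_N) (p : 'S_N) : (l.+1 < N)%N ->
  Tmat xi l (p l) (p (nextpos l)) (hidx N k) (hidx N k) * G (swapw l p) = - G p.
Proof.
move=> hl.
rewrite TmatE // !eqxx mulr1 mul1r hidx_val hdigit //.
set l' := nextpos l.
have hl' : nat_of_ord l' = l.+1 by exact: nextposE.
have nll' : l != l' by apply/eqP => /(congr1 (@nat_of_ord N)); rewrite hl'; lia.
set u := 1 - xi (p l); set v := 1 - xi (p l').
have u0 : u != 0 by apply: unit1.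
have v0 : v != 0 by apply: unit1.
have split q : G q = (1 - xi (q l))^(ee l) * ((1 - xi (q l'))^(ee l') *
    \prod_(i < N | (i != l) && (i != l')) (1 - xi (q i))^(ee i)).
  by rewrite /G (bigD1 l) // (bigD1 l') 1?eq_sym.
rewrite !split.
have -> : \prod_(i < N | (i != l) && (i != l')) (1 - xi (swapw l p i)) ^ ee i =
          \prod_(i < N | (i != l) && (i != l')) (1 - xi (p i)) ^ ee i.
  apply: eq_bigr => i /andP[h1 h2].
  by rewrite /swapw permM tpermD // eq_sym.
rewrite /swapw !permM tpermL tpermR -/u -/v.
set R := \prod_(i < N | _) _.
rewrite hl' /ee.
case: (ltnP l.+1 k) => h1.
  rewrite (ltnW h1) /Sf -/u -/v.
  have -> : (l.+1)%:Z = l%:Z + 1 by rewrite -addn1 PoszD.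
  rewrite !expfzDr // !expr1z; field; exact: u0.
have [h2|h2] := eqVneq (l.+1) k.
  rewrite -h2 ltnSn /Sf -/u -/v.
  have -> : (l.+1)%:Z - 1 = l%:Z by rewrite -addn1 PoszD addrK.
  ring.
have h3 : ~~ (l < k)%N by lia.
rewrite (negbTE h3) /Sf -/u -/v.
have -> : (l.+1)%:Z - 1 = (l%:Z - 1) + 1 by rewrite -addn1 PoszD addrK subrK.
rewrite [u ^ (_ - 1 + 1)]expfzDr // [v ^ (_ - 1 + 1)]expfzDr // !expr1z; field; exact: u0.
Qed.

Lemma main_ind (p : 'S_N) a : all (fun l : 'I_N => (l.+1 < N)%N) a ->
  Aaux xi p a (hidx N k) (hidx N k) * G (wordp p a) = (-1) ^+ size a * G p.
Proof.
elim: a p => [|l a IH] p /=; first by rewrite mxE eqxx mulr1n expr0 !mul1r.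
case/andP=> hl ha.
rewrite diag_mulmx; [|exact: Aaux_upper|by move=> i j; apply: Tmat_upper].
rewrite mulrAC IH // -mulrA [G _ * _]mulrC key_step // exprS; ring.
Qed.

Lemma odd_wordp (p : 'S_N) a : all (fun l : 'I_N => (l.+1 < N)%N) a ->
  odd_perm (wordp p a) = odd_perm p (+) odd (size a).
Proof.
elim: a p => [|l a IH] p /=; first by rewrite addbF.
case/andP=> hl ha; rewrite IH // /swapw odd_permM odd_tperm.
have -> : (l != nextpos l) = true.
  by apply/eqP => /(congr1 (@nat_of_ord N)); rewrite nextposE //; lia.
by case: (odd_perm p); case: (odd (size a)).
Qed.
End S.

Theorem lemma2p2 (F : fieldType) (N : nat) (xi : 'I_N -> F)
    (hxi : forall i, xi i != 1) (hN : (2 <= N)%N)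
    (sigma : 'S_N) (a : seq 'I_N)
    (ha : all (fun l : 'I_N => (l.+1 < N)%N) a)
    (hsigma : wordp 1 a = sigma)
    (k : 'I_N.+1) :
  Amat xi a (hidx N k) (hidx N k) =
    (-1) ^+ odd_perm sigma
    * (\prod_(j < N | (j < k)%N) ((1 - xi j) / (1 - xi (sigma j))) ^ (j%:Z))
    * (\prod_(j < N | (k <= j)%N) ((1 - xi j) / (1 - xi (sigma j))) ^ (j%:Z - 1)).
Proof.
have hk : (k <= N)%N by rewrite -ltnS ltn_ord.
have M := main_ind hk hxi 1 ha.
rewrite hsigma in M.
have Gs0 : G xi k sigma != 0.
  by apply/prodf_neq0 => j _; rewrite expfz_neq0 // unit1.
have -> : Amat xi a (hidx N k) (hidx N k) = (-1) ^+ size a * G xi k 1 / G xi k sigma.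
  by rewrite -M mulfK.
have ho : odd (size a) = odd_perm sigma by rewrite -hsigma (odd_wordp hk 1 ha) odd_perm1.
rewrite -signr_odd ho -mulrA -[RHS]mulrA.
congr (_ * _).
rewrite [X in _ = _ * X](eq_bigl (fun j : 'I_N => ~~ (j < k)%N)); last by move=> j; rewrite leqNgt.
rewrite /G [X in X / _](bigID (fun j : 'I_N => (j < k)%N)) /=.
rewrite [X in _ / X](bigID (fun j : 'I_N => (j < k)%N)) /=.
rewrite invfM mulrACA; congr (_ * _).
  rewrite -prodfV -big_split /=; apply: eq_bigr => j hj.
  by rewrite perm1 /ee hj expfzMl exprz_inv invr_expz.
rewrite -prodfV -big_split /=; apply: eq_bigr => j hj.
by rewrite perm1 /ee (negbTE hj) expfzMl exprz_inv invr_expz.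
Qed.
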